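(* Let $r\ge3$, $n=2^r$, $m=2^{r-2}$ and $N=m$, so that $\Psi_n(x)=V_m(x)$. Let $p(x),q(x)\in\mathbb Z[x]$ have degree at most $m-1$, written $p=\sum_{i<m}a_iV_i$, $q=\sum_{i<m}b_iV_i$, and let $\overline r(x)=\sum_{i<m}c_iV_i(x)$ be the residue of $p(x)q(x)$ modulo $\Psi_n(x)$. Then $$\mathbf c=\frac4N\,\mathsf{IDCT}\big(\mathsf{DCT}(\mathbf a)\odot\mathsf{DCT}(\mathbf b)\big),$$ where $\mathbf a,\mathbf b,\mathbf c$ are the coefficient vectors and $\odot$ is the componentwise product.
   Context: $V_0(x)=1$, $V_i(x)=2T_i(x/2)$ for $i\ge1$ ($T_i$ the Chebyshev polynomial of the first kind). $\Psi_n$ is the minimal polynomial of $2\cos(2\pi/n)$. For $\mathbf a\in\mathbb R^N$: $\mathsf{DCT}(\mathbf a)_j=\frac{a_0}{2}+\sum_{i=1}^{N-1}a_i\cos\!\left(\frac{2\pi(2j+1)i}{4N}\right)$ and $\mathsf{IDCT}(\mathbf a)_j=\sum_{i=0}^{N-1}a_i\cos\!\left(\frac{2\pi(2i+1)j}{4N}\right)$, $0\le j\le N-1$. *)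

(* Defs.v *)
From HB Require Import structures.
From mathcomp Require Import all_boot all_order all_algebra.
From mathcomp Require Import reals trigo.
Set Implicit Arguments. Unset Strict Implicit. Unset Printing Implicit Defensive.
Import Order.TTheory GRing.Theory Num.Theory.
Local Open Scope ring_scope.

Fixpoint chebT (R : nzRingType) (i : nat) : {poly R} :=
  match i with
  | 0 => 1
  | 1 => 'X
  | (j.+1 as k).+1 => 2%:R *: 'X * chebT R k - chebT R j
  end.

Definition V (i : nat) : {poly rat} :=
  if i == 0%N then 1 else 2%:P * (chebT rat i \Po ((1/2 : rat) *: 'X)).

Definition Vsum (m : nat) (a : nat -> rat) : {poly rat} :=
  \sum_(i < m) a i *: V i.

Definition is_minpoly (R : realType) (P : {poly rat}) (alpha : R) : Prop :=
  [/\ P \is monic, root (map_poly (fun x : rat => ratr x : R) P) alpha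
    & forall Q : {poly rat}, Q != 0 ->
        root (map_poly (fun x : rat => ratr x : R) Q) alpha -> (size P <= size Q)%N].

Definition DCT (R : realType) (N : nat) (a : nat -> R) (j : nat) : R :=
  a 0%N / 2 + \sum_(1 <= i < N)
     a i * cos (2 * pi * ((2 * j + 1) * i)%:R / (4 * N)%:R).

Definition IDCT (R : realType) (N : nat) (a : nat -> R) (j : nat) : R :=
  \sum_(0 <= i < N) a i * cos (2 * pi * ((2 * i + 1) * j)%:R / (4 * N)%:R).

(* Main.v *)
Require Import Defs.
From HB Require Import structures.
From mathcomp Require Import all_boot all_order all_algebra.
From mathcomp Require Import reals trigo.
From mathcomp Require Import ring lra zify.
Import Order.TTheory GRing.Theory Num.Theory.
Local Open Scope ring_scope.
Definition toF2 := map_poly (intr : int -> 'F_2).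

Lemma F2char : 2%N \in [char 'F_2].
Proof. exact: pchar_Fp. Qed.

Lemma toF2_coef0 (P : {poly int}) : (toF2 P)`_0 = 0 -> (2 %| P`_0)%Z.
Proof. by rewrite coef_map_id0 // (dvdz_pcharf F2char) => ->. Qed.

Lemma eisen (W P S : {poly int}) (M : nat) (t : int) :
  (0 < M)%N -> size W = M.+1 -> toF2 W = 'X^M -> W`_0 = 2 + 4 * t ->
  W = P * S -> size P = 1%N \/ size S = 1%N.
Proof.
move=> M0 sW FW W0 WPS.
have W0n : W != 0 by rewrite -size_poly_gt0 sW.
have P0 : P != 0 by apply: contra W0n; rewrite WPS => /eqP->; rewrite mul0r.
have S0 : S != 0 by apply: contra W0n; rewrite WPS => /eqP->; rewrite mulr0.
have FM : toF2 P * toF2 S = 'X^M by rewrite -rmorphM -WPS.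
have FP0 : toF2 P != 0 by apply/negP => /eqP h; move: FM; rewrite h mul0r => /eqP; rewrite eq_sym -size_poly_eq0 size_polyXn.
have FS0 : toF2 S != 0 by apply/negP => /eqP h; move: FM; rewrite h mulr0 => /eqP; rewrite eq_sym -size_poly_eq0 size_polyXn.
have szP : size (toF2 P) = size P.
  have h1 : (size (toF2 P) <= size P)%N by rewrite /toF2 map_polyE; apply: leq_trans (size_Poly _) _; rewrite size_map.
  have h2 : (size (toF2 S) <= size S)%N by rewrite /toF2 map_polyE; apply: leq_trans (size_Poly _) _; rewrite size_map.
  have h3 : (size (toF2 P) + size (toF2 S) - 1 = M.+1)%N by rewrite subn1 -size_mul // FM size_polyXn.
  have h4 : (size P + size S - 1 = M.+1)%N by rewrite subn1 -size_mul // -WPS sW.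
  have hP : (0 < size (toF2 P))%N by rewrite size_poly_gt0.
  have hS : (0 < size (toF2 S))%N by rewrite size_poly_gt0.
  lia.
have szS : size (toF2 S) = size S.
  have h1 : (size (toF2 P) <= size P)%N by rewrite /toF2 map_polyE; apply: leq_trans (size_Poly _) _; rewrite size_map.
  have h2 : (size (toF2 S) <= size S)%N by rewrite /toF2 map_polyE; apply: leq_trans (size_Poly _) _; rewrite size_map.
  have h3 : (size (toF2 P) + size (toF2 S) - 1 = M.+1)%N by rewrite subn1 -size_mul // FM size_polyXn.
  have h4 : (size P + size S - 1 = M.+1)%N by rewrite subn1 -size_mul // -WPS sW.
  have hP : (0 < size (toF2 P))%N by rewrite size_poly_gt0.
  have hS : (0 < size (toF2 S))%N by rewrite size_poly_gt0.
  lia.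
have key : forall Q Q' : {poly int}, toF2 Q * toF2 Q' = 'X^M -> size (toF2 Q) = size Q ->
    (1 < size Q)%N -> (2 %| Q`_0)%Z.
  move=> Q Q' hQ szQ s1; apply: toF2_coef0.
  have : toF2 Q %| ('X - 0%:P) ^+ M by rewrite subr0 -hQ dvdp_mulr.
  case/dvdp_exp_XsubCP => k _ hk.
  have hsz := eqp_size hk; rewrite subr0 size_polyXn szQ in hsz.
  case/eqpP: hk => [[c1 c2]] /= /andP [c10 c20]; rewrite subr0 => hc; have := congr1 (fun p : {poly _} => p`_0) hc => /=.
  rewrite coefZ coefZ coefXn.
  have -> : (0 == k) = false by apply/negbTE; lia.
  rewrite mulr0 => /eqP; rewrite mulf_eq0 (negbTE c10) /= => /eqP //.
have [P1|P1] := leqP (size P) 1%N.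
  left; have : (0 < size P)%N by rewrite size_poly_gt0. lia.
have [S1|S1] := leqP (size S) 1%N.
  right; have : (0 < size S)%N by rewrite size_poly_gt0. lia.
exfalso.
have /dvdzP [a ha] := key P S FM szP P1.
have /dvdzP [b hb] := key S P ltac:(by rewrite mulrC) szS S1.
move: W0; rewrite WPS coef0M ha hb => h.
lia.
Qed.

Fixpoint Wz (j : nat) : {poly int} :=
  match j with 0 => 'X^2 - 2%:P | j.+1 => (Wz j) ^+ 2 - 2%:P end.

Lemma F2_2 : (2%:~R : 'F_2) = 0.
Proof. change ((2%:R : 'F_2) = 0); exact: pchar_Fp_0. Qed.

Lemma Wz_F2 j : toF2 (Wz j) = 'X^(2 ^ j.+1).
Proof.
elim: j => [|j IH] /=.
  by rewrite /toF2 rmorphB /= map_polyXn map_polyC /= F2_2 subr0.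
rewrite /toF2 rmorphB rmorphXn /= -/(toF2 _) IH map_polyC /= F2_2 subr0.
by rewrite -exprM -expnSr.
Qed.

Lemma Wz_0 j : exists t : int, (Wz j)`_0 = 2 + 4 * t.
Proof.
elim: j => [|j [t IH]] /=.
  by exists (-1); rewrite coefB coefXn coefC /=; lia.
exists (4 * t + 4 * t ^+ 2).
rewrite coefB coefC /= -!horner_coef0 hornerE /= horner_coef0 IH.
ring.
Qed.

Lemma Wz_monic j : (Wz j \is monic) /\ size (Wz j) = (2 ^ j.+1).+1.
Proof.
elim: j => [|j [IHm IHs]] /=.
  split; first by apply: monicXnsubC.
  by rewrite size_XnsubC.
have hm : (Wz j) ^+ 2 \is monic by apply: monic_exp.
have hs : size ((Wz j) ^+ 2) = (2 ^ j.+2).+1.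
  have h1 : ((size ((Wz j) ^+ 2)).-1 = 2 ^ j.+1 * 2)%N by rewrite size_exp IHs.
  have h2 : (0 < size ((Wz j) ^+ 2))%N by rewrite size_poly_gt0 monic_neq0.
  rewrite expnS; lia.
have hc : (size (- (2%:P : {poly int})) <= 1)%N by rewrite size_polyN size_polyC_leq1.
have hlt : (size (- (2%:P : {poly int})) < size ((Wz j) ^+ 2))%N by rewrite hs; apply: leq_ltn_trans hc _; rewrite ltnS expn_gt0.
split.
  by rewrite monicE lead_coefDl // -monicE.
by rewrite size_addl.
Qed.
Definition phi (R : realType) (N : nat) : R := pi / (2 * N)%:R.

Lemma sin_natpi (R : realType) (s : nat) : sin (s%:R * (pi : R)) = 0.
Proof.
have := alternatingn (@sinDpi R) s 0; rewrite add0r sin0 mulr0 => <-.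
by rewrite mulr_natl.
Qed.

Lemma sum_cos0 (R : realType) (N s : nat) : (0 < N)%N -> (0 < s < 2 * N)%N ->
  \sum_(j < N) cos (((2 * j + 1) * s)%:R * phi R N) = 0.
Proof.
move=> N0 /andP [s0 s2N].
set b : R := s%:R * phi R N.
have NR : (N%:R : R) != 0 by rewrite pnatr_eq0 -lt0n.
have bpi : b = pi * (s%:R / (2 * N)%:R) by rewrite /b /phi; ring.
have sb : 0 < sin b.
  apply: sin_gt0_pi; apply/andP; split.
    by rewrite bpi mulr_gt0 ?pi_gt0 // divr_gt0 // ltr0n //; lia.
  rewrite bpi -[X in _ < X]mulr1 ltr_pM2l ?pi_gt0 // ltr_pdivrMr ?ltr0n ?mul1r ?ltr_nat //; lia.
have key : forall j : nat, cos (((2 * j + 1) * s)%:R * phi R N) * (sin b *+ 2) =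
    sin ((2 * j.+1)%:R * b) - sin ((2 * j)%:R * b).
  move=> j.
  have -> : (2 * j.+1)%:R * b = ((2 * j + 1) * s)%:R * phi R N + b.
    by rewrite /b !(natrM, natrD); ring.
  have -> : (2 * j)%:R * b = ((2 * j + 1) * s)%:R * phi R N - b.
    by rewrite /b !(natrM, natrD); ring.
  rewrite sinD sinB; ring.
have : (\sum_(j < N) cos (((2 * j + 1) * s)%:R * phi R N)) * (sin b *+ 2) = 0.
  rewrite mulr_suml.
  under eq_bigr do rewrite key.
  rewrite -(big_mkord xpredT (fun j => sin ((2 * j.+1)%:R * b) - sin ((2 * j)%:R * b))).
  rewrite (telescope_sumr (fun j => sin ((2 * j)%:R * b))) //.
  have -> : (2 * N)%:R * b = s%:R * pi by rewrite /b /phi; field.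
  by rewrite sin_natpi muln0 mul0r sin0 subr0.
move/eqP; rewrite mulf_eq0 => /orP [/eqP //|].
by rewrite mulrn_eq0 /= (gt_eqF sb).
Qed.

Lemma sum_cosE (R : realType) (N s : nat) : (0 < N)%N -> (s < 2 * N)%N ->
  \sum_(j < N) cos (((2 * j + 1) * s)%:R * phi R N) = if s == 0%N then N%:R else 0.
Proof.
move=> N0 sN; case: eqP => [->|/eqP s0].
  under eq_bigr do rewrite muln0 mul0r cos0.
  by rewrite sumr_const card_ord.
by apply: sum_cos0 => //; rewrite sN lt0n s0.
Qed.

Lemma cos_prod (R : realType) (N i k j : nat) :
  cos (((2 * j + 1) * i)%:R * phi R N) * cos (((2 * j + 1) * k)%:R * phi R N) =
  (cos (((2 * j + 1) * (i + k))%:R * phi R N) +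
   cos (((2 * j + 1) * (maxn i k - minn i k))%:R * phi R N)) / 2.
Proof.
set A := ((2 * j + 1) * i)%:R * phi R N.
set B := ((2 * j + 1) * k)%:R * phi R N.
have -> : ((2 * j + 1) * (i + k))%:R * phi R N = A + B by rewrite /A /B mulnDr natrD mulrDl.
case: (leqP k i) => ki.
  have -> : ((2 * j + 1) * (i - k))%:R * phi R N = A - B.
    by rewrite /A /B mulnBr natrB ?leq_mul2l ?ki ?orbT // mulrBl.
  by rewrite cosD cosB; field.
have -> : ((2 * j + 1) * (k - i))%:R * phi R N = B - A.
  by rewrite /A /B mulnBr natrB ?leq_mul2l ?(ltnW ki) ?orbT // mulrBl.
by rewrite cosD cosB; field.
Qed.

Lemma orth (R : realType) (N i k : nat) : (0 < N)%N -> (i < N)%N -> (k < N)%N ->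
  \sum_(j < N) cos (((2 * j + 1) * i)%:R * phi R N) * cos (((2 * j + 1) * k)%:R * phi R N)
  = if i == k then (if i == 0%N then N%:R else N%:R / 2) else 0.
Proof.
move=> N0 iN kN.
under eq_bigr do rewrite cos_prod.
rewrite -mulr_suml big_split /= !sum_cosE //; last 2 first.
- lia.
- lia.
case: (eqVneq i k) => [<-|ik].
  rewrite maxnn minnn subnn eqxx addnn.
  case: (eqVneq i 0%N) => [->|i0] /=; first by field.
  have -> : (i.*2 == 0%N) = false by lia.
  by rewrite add0r.
have -> : ((i + k) == 0%N) = false by lia.
have -> : ((maxn i k - minn i k)%N == 0%N) = false by lia.
by rewrite addr0 mul0r.
Qed.

Lemma dct_angle (R : realType) (N X : nat) : (0 < N)%N ->
  2 * pi * X%:R / (4 * N)%:R = X%:R * phi R N :> R.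
Proof.
move=> N0; have NR : (N%:R : R) != 0 by rewrite pnatr_eq0 -lt0n.
by rewrite /phi !natrM; field.
Qed.

Lemma DCT_alt (R : realType) (N : nat) (u : nat -> R) (j : nat) : (0 < N)%N ->
  DCT N u j = \sum_(i < N) (if (i : nat) == 0%N then 1/2 else 1) * u i * cos (((2 * j + 1) * i)%:R * phi R N).
Proof.
move=> N0; rewrite /DCT.
case: N N0 => // N' _.
rewrite big_ord_recl /= muln0 mul0r cos0 mulr1.
rewrite big_add1 /= big_mkord.
congr (_ + _); first by rewrite mulrC mul1r.
apply: eq_bigr => i _.
by rewrite /bump /= add1n mul1r dct_angle.
Qed.

Lemma dct_inv (R : realType) (N : nat) (u : nat -> R) (k : nat) : (0 < N)%N -> (k < N)%N ->
  (2 / N%:R) * \sum_(j < N) DCT N u j * cos (((2 * j + 1) * k)%:R * phi R N) = u k.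
Proof.
move=> N0 kN; have NR : (N%:R : R) != 0 by rewrite pnatr_eq0 -lt0n.
under eq_bigr do rewrite DCT_alt // mulr_suml.
rewrite exchange_big /=.
under eq_bigr => j _ do (under eq_bigr do rewrite -(mulrA (_ * _)); rewrite -mulr_sumr orth //).
rewrite (bigD1 (Ordinal kN)) //= eqxx big1 ?addr0; last first.
  move=> i /negbTE ik; have -> : (i == k :> nat) = false.
    by apply/negbTE; move: ik; apply: contraFN => /eqP h; apply/eqP/val_inj.
  by rewrite mulr0.
case: (eqVneq k 0%N) => _; by field.
Qed.

Definition ev {R : realType} (p : {poly rat}) (x : R) : R := (map_poly ratr p).[x].

Lemma chebT_map (R : realType) (i : nat) : map_poly (ratr : rat -> R) (chebT rat i) = chebT R i.
Proof.
suff : map_poly (ratr : rat -> R) (chebT rat i) = chebT R i /\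
       map_poly (ratr : rat -> R) (chebT rat i.+1) = chebT R i.+1 by case.
elim: i => [|i [IH1 IH2]].
  by split; rewrite /= ?rmorph1 ?map_polyX.
split => //.
by rewrite /= rmorphB rmorphM /= map_polyZ map_polyX IH1 IH2 rmorph_nat.
Qed.

Lemma chebT_cos (R : realType) (i : nat) (t : R) : (chebT R i).[cos t] = cos (i%:R * t).
Proof.
suff : (chebT R i).[cos t] = cos (i%:R * t) /\ (chebT R i.+1).[cos t] = cos (i.+1%:R * t) by case.
elim: i => [|i [IH1 IH2]].
  by split; rewrite /= ?hornerC ?hornerX ?mul0r ?cos0 ?mul1r.
split => //.
rewrite /= hornerD hornerN hornerM hornerZ hornerX IH1 IH2.
have e1 : (i.+2%:R * t) = i.+1%:R * t + t by rewrite -addn1 natrD; ring.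
have e2 : (i%:R * t) = i.+1%:R * t - t by rewrite -[i.+1]addn1 natrD; ring.
rewrite e1 e2 cosB cosD; ring.
Qed.

Lemma ev_V (R : realType) (i : nat) (t : R) :
  ev (V i) (2 * cos t) = if i == 0%N then 1 else 2 * cos (i%:R * t).
Proof.
rewrite /ev /V; case: eqP => [_|_]; first by rewrite rmorph1 hornerC.
rewrite rmorphM /= map_polyC /= map_comp_poly chebT_map map_polyZ map_polyX.
rewrite hornerM hornerC horner_comp hornerZ hornerX rmorph_nat.
have -> : 1 / 2 * (2 * cos t) = cos t :> R by field.
by rewrite chebT_cos.
Qed.

Lemma poly_eq_ev (R : realType) (p q : {poly rat}) :
  (forall t : R, ev p (2 * cos t) = ev q (2 * cos t)) -> p = q.
Proof.
move=> h; apply/eqP; rewrite -subr_eq0; apply/negPn/negP => pq0.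
set d := map_poly (ratr : rat -> R) (p - q).
have d0 : d != 0 by rewrite map_poly_eq0.
set n := size d.
have n0 : (0 < n)%N by rewrite size_poly_gt0.
have nR : (0 : R) < n%:R by rewrite ltr0n.
pose rs := [seq (i%:R / n%:R : R) | i <- iota 0 n].
have H1 : all (root d) rs.
  apply/allP => x /mapP [i]; rewrite mem_iota add0n => /andP [_ iN] ->.
  set y : R := i%:R / n%:R.
  have y0 : 0 <= y by rewrite divr_ge0 ?ler0n // ltW.
  have y1 : y <= 1 by rewrite ler_pdivrMr // mul1r ler_nat ltnW.
  have hy : y / 2 \in `[(-1), 1] by rewrite in_itv /=; apply/andP; split; lra.
  have ey : y = 2 * cos (acos (y / 2)) by rewrite acosK //; field.
  rewrite /root /d rmorphB /= hornerD hornerN ey.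
  by have := h (acos (y / 2)); rewrite /ev => ->; rewrite subrr.
have H2 : uniq rs.
  rewrite map_inj_uniq ?iota_uniq // => i j /(congr1 (fun x => x * n%:R)).
  by rewrite !divfK ?lt0r_neq0 // => /eqP; rewrite eqr_nat => /eqP.
have := max_poly_roots d0 H1 H2.
by rewrite size_map size_iota ltnn.
Qed.

Lemma V_double (R : realType) (i : nat) : (0 < i)%N -> V (2 * i) = V i ^+ 2 - 2%:P.
Proof.
move=> i0; apply: (@poly_eq_ev R) => t.
rewrite ev_V; have -> : (2 * i == 0)%N = false by lia.
rewrite /ev rmorphB rmorphXn /= map_polyC /= hornerD hornerN horner_exp hornerC.
rewrite -/(ev (V i) (2 * cos t)) ev_V; have -> : (i == 0)%N = false by lia.
rewrite rmorph_nat.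
have -> : (2 * i)%:R * t = (i%:R * t) *+ 2 by rewrite natrM mulr_natl -mulrnAl.
rewrite cos_mulr2n; ring.
Qed.

Lemma V1 (R : realType) : V 1 = 'X.
Proof.
apply: (@poly_eq_ev R) => t.
by rewrite ev_V /= mul1r /ev map_polyX hornerX.
Qed.

Definition pZ := map_poly (intr : int -> rat).
Lemma Wz_V (R : realType) (j : nat) : pZ (Wz j) = V (2 ^ j.+1).
Proof.
elim: j => [|j IH].
  have e : V (2 ^ 1) = V 1 ^+ 2 - 2%:P by exact: (V_double R 1).
  rewrite e (V1 R) /= /pZ rmorphB /= map_polyXn map_polyC /=.
  by congr (_ - _); rewrite polyCn.
have e : V (2 ^ j.+2) = V (2 ^ j.+1) ^+ 2 - 2%:P.
  by rewrite expnS; apply: (V_double R); rewrite expn_gt0.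
rewrite e /= -IH /pZ rmorphB /= rmorphXn /= map_polyC /=.
by congr (_ - _); rewrite polyCn.
Qed.

Lemma cos_odd_pihalf (R : realType) (k : nat) : cos ((2 * k + 1)%:R * (pi / 2)) = 0 :> R.
Proof.
have -> : (2 * k + 1)%:R * (pi / 2) = pi / 2 + pi *+ k :> R.
  by rewrite natrD natrM -mulr_natr; field.
by rewrite alternatingn ?cos_pihalf ?mulr0 //; apply: cosDpi.
Qed.

Lemma ev_VN_root (R : realType) (N k : nat) : (0 < N)%N ->
  ev (V N) (2 * cos ((2 * k + 1)%:R * phi R N)) = 0.
Proof.
move=> N0; rewrite ev_V; have -> : (N == 0)%N = false by lia.
have NR : (N%:R : R) != 0 by rewrite pnatr_eq0 -lt0n.
have -> : N%:R * ((2 * k + 1)%:R * phi R N) = (2 * k + 1)%:R * (pi / 2) :> R.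
  by rewrite /phi natrM; field.
by rewrite cos_odd_pihalf mulr0.
Qed.

Lemma Psi_eq (R : realType) (r : nat) (hr : (3 <= r)%N) (Psi : {poly rat})
  (hPsi : is_minpoly Psi (2 * cos (2 * pi / (2 ^ r)%:R) : R)) : Psi = V (2 ^ (r - 2)).
Proof.
set N := (2 ^ (r - 2))%N.
have N0 : (0 < N)%N by rewrite expn_gt0.
have eN : N = (2 ^ (r - 3).+1)%N by rewrite /N (_ : (r - 2 = (r - 3).+1)%N) //; lia.
have NR : (N%:R : R) != 0 by rewrite pnatr_eq0 -lt0n.
have ealpha : 2 * pi / (2 ^ r)%:R = (2 * 0 + 1)%:R * phi R N :> R.
  have -> : (2 ^ r)%N = (4 * N)%N by rewrite /N -[4%N]/(2 ^ 2)%N -expnD subnKC // ltnW.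
  by rewrite /phi !natrM mul1r; field.
case: hPsi => monPsi rootPsi minPsi.
change (is_true (root (map_poly (ratr : rat -> R) Psi) (2 * cos (2 * pi / (2 ^ r)%:R)))) in rootPsi.
rewrite ealpha in rootPsi.
have Psi0 : Psi != 0 by apply: monic_neq0.
have rootV : root (map_poly (ratr : rat -> R) (V N)) (2 * cos (2 * pi / (2 ^ r)%:R)).
  by rewrite ealpha /root -/(ev _ _) ev_VN_root.
have dv : Psi %| V N.
  apply/modp_eq0P/eqP/negPn/negP => hm.
  have em : V N %% Psi = V N - (V N %/ Psi) * Psi.
    apply/eqP; rewrite eq_sym subr_eq addrC -divp_eq //.
  have hroot : root (map_poly (fun x : rat => ratr x : R) (V N %% Psi)) (2 * cos (2 * pi / (2 ^ r)%:R)).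
    change (is_true (root (map_poly (ratr : rat -> R) (V N %% Psi)) (2 * cos (2 * pi / (2 ^ r)%:R)))).
    rewrite em rmorphB rmorphM /= /root hornerD hornerN hornerM.
    move/eqP: rootV => ->; rewrite ealpha; move/eqP: rootPsi => ->.
    by rewrite mulr0 subr0.
  have := minPsi _ hm hroot.
  by rewrite leqNgt ltn_modp Psi0.
have hV : V N = pZ (Wz (r - 3)) by rewrite eN (Wz_V R).
have monV : V N \is monic by rewrite hV /pZ; apply: monic_map; case: (Wz_monic (r - 3)).
suff szE : size Psi = size (V N).
  by apply/eqP; rewrite -eqp_monic // -dvdp_size_eqp // szE.
have dv' := dv; rewrite hV /pZ in dv'.
case: (dvdpP_rat_int dv') => p1 [c c0 hP] [s hs].
have [tt h0] := Wz_0 (r - 3).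
have [mon sz] := Wz_monic (r - 3).
have szP : size Psi = size p1 by rewrite hP size_scale // size_rat_int_poly.
case: (@eisen _ p1 s _ tt _ sz (Wz_F2 _) h0 hs) => [|h1|h1].
- by rewrite expn_gt0.
- exfalso.
  have hc : Psi = (Psi`_0)%:P by apply: size1_polyC; rewrite szP h1.
  have : lead_coef Psi = 1 by apply/eqP.
  rewrite hc lead_coefC => e1; rewrite e1 in hc.
  by move: rootPsi; rewrite hc rmorph1 /root hornerC oner_eq0.
- have W0 : Wz (r - 3) != 0 by apply: monic_neq0.
  have p10 : p1 != 0 by apply: contra W0; rewrite hs => /eqP ->; rewrite mul0r.
  have s0 : s != 0 by rewrite -size_poly_gt0 h1.
  have : size (Wz (r - 3)) = size p1 by rewrite hs size_mul // h1 addn1.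
  by rewrite szP hV /pZ size_rat_int_poly => ->.
Qed.

Lemma ev_Vsum (R : realType) (N : nat) (u : nat -> rat) (k : nat) : (0 < N)%N ->
  ev (Vsum N u) (2 * cos ((2 * k + 1)%:R * phi R N)) = 2 * DCT N (fun i => ratr (u i) : R) k.
Proof.
move=> N0; rewrite DCT_alt // /ev /Vsum rmorph_sum /= horner_sum mulr_sumr.
apply: eq_bigr => i _.
rewrite map_polyZ hornerZ -/(ev (V i) _) ev_V.
have -> : i%:R * ((2 * k + 1)%:R * phi R N) = ((2 * k + 1) * i)%:R * phi R N :> R.
  by rewrite natrM; ring.
case: eqP => [->|_]; first by rewrite muln0 mul0r cos0; field.
ring.
Qed.

Theorem mainTheorem8 (R : realType) (r : nat) (hr : (3 <= r)%N)
  (Psi : {poly rat})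
  (hPsi : is_minpoly Psi (2 * cos (2 * pi / (2 ^ r)%:R) : R))
  (a b : nat -> int) (c : nat -> rat)
  (hc : (Vsum (2 ^ (r - 2)) (fun i => (a i)%:~R)
         * Vsum (2 ^ (r - 2)) (fun i => (b i)%:~R)) %% Psi
        = Vsum (2 ^ (r - 2)) c) :
  forall k : nat, (k < 2 ^ (r - 2))%N ->
    (ratr (c k) : R) =
      4 / (2 ^ (r - 2))%:R *
      IDCT (2 ^ (r - 2))
        (fun j => DCT (2 ^ (r - 2)) (fun i => (a i)%:~R : R) j
                  * DCT (2 ^ (r - 2)) (fun i => (b i)%:~R : R) j) k.
Proof.
move=> k kN.
have hP := @Psi_eq R r hr Psi hPsi.
rewrite hP in hc.
move: kN hc; set N := (2 ^ (r - 2))%N => kN hc.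
have N0 : (0 < N)%N by rewrite expn_gt0.
have NR : (N%:R : R) != 0 by rewrite pnatr_eq0 -lt0n.
set A := Vsum N (fun i => (a i)%:~R).
set B := Vsum N (fun i => (b i)%:~R).
have ea : (fun i => ratr ((a i)%:~R : rat) : R) = (fun i => (a i)%:~R) by apply: boolp.funext => i; rewrite rmorph_int.
have eb : (fun i => ratr ((b i)%:~R : rat) : R) = (fun i => (b i)%:~R) by apply: boolp.funext => i; rewrite rmorph_int.
have key : forall j, DCT N (fun i => ratr (c i) : R) j =
    2 * (DCT N (fun i => (a i)%:~R : R) j * DCT N (fun i => (b i)%:~R : R) j).
  move=> j.
  have e := divp_eq (A * B) (V N); rewrite hc in e.
  have hV0 : ev (V N) (2 * cos ((2 * j + 1)%:R * phi R N)) = 0 by apply: ev_VN_root.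
  have hA : ev A (2 * cos ((2 * j + 1)%:R * phi R N)) = 2 * DCT N (fun i => (a i)%:~R : R) j.
    by rewrite /A ev_Vsum // ea.
  have hB : ev B (2 * cos ((2 * j + 1)%:R * phi R N)) = 2 * DCT N (fun i => (b i)%:~R : R) j.
    by rewrite /B ev_Vsum // eb.
  have hC : ev (Vsum N c) (2 * cos ((2 * j + 1)%:R * phi R N)) = 2 * DCT N (fun i => ratr (c i) : R) j.
    by rewrite ev_Vsum.
  move: hV0 hA hB hC.
  set x : R := 2 * cos _ => hV0 hA hB hC.
  have := congr1 (ev^~ x) e.
  rewrite /ev rmorphD rmorphM /= rmorphM /= !hornerD !hornerM -!/(ev _ _).
  rewrite hV0 hA hB hC mulr0 add0r => h.
  have h2 : (2 : R) != 0 by rewrite pnatr_eq0.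
  apply: (mulfI h2); rewrite -h; ring.
rewrite -(@dct_inv R N (fun i => ratr (c i) : R) k N0 kN).
rewrite /IDCT big_mkord !mulr_sumr.
apply: eq_bigr => j _.
rewrite key dct_angle //; ring.
Qed.
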